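(* Let $\mathcal{M}$ be a class of $\mathcal{L}$-structures and $\Sigma$ a class of formulas of $\mathcal{L}_A$ containing all atomic formulas and closed under subformulas. For every condition $p$ of $\mathcal{P}(\mathcal{M},\Sigma)$ and all sentences in $\Sigma(C)$ of the indicated forms: $H^w_p(\varphi)=\sup_{q\le p}H^w_q(\varphi)=\sup_{q\le p}\inf_{q'\le q}H^w_{q'}(\varphi)$; $H^w_p(\neg\varphi)=1-\inf_{q\le p}H^w_q(\varphi)$; $H^w_p(\tfrac12\varphi)=\tfrac12H^w_p(\varphi)$; $H^w_p(\varphi\dotplus\psi)=\sup_{q\le p}\inf_{q'\le q}\min\big(H^w_{q'}(\varphi)+H^w_{q'}(\psi),1\big)$; $H^w_p(\bigwedge\Phi)=\sup_{q\le p}\inf_{q'\le q}\inf_{\varphi\in\Phi}H^w_{q'}(\varphi)$; $H^w_p(\inf_x\varphi(x))=\sup_{q\le p}\inf_{q'\le q}\inf_{c\in C}H^w_{q'}(\varphi(c))$.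
   Context: $\mathcal{L}$ is a countable continuous signature; formulas of $\mathcal{L}_{\omega_1,\omega}$ are built from atomic formulas using $\neg$ ($1-x$), $\tfrac12$, $\dotplus$ ($\min(x+y,1)$), countable conjunctions $\bigwedge$ (infimum) and $\inf_x$, interpreted in structures with values in $[0,1]$. $\mathcal{L}_A$ is a countable fragment. $C=\{c_i:i<\omega\}$ are new constants. $\mathcal{M}(C)$ is the class of structures $(M,a_c)_{c\in C_0}$ with $M\in\mathcal{M}$, $C_0\subseteq C$ finite. $\Sigma(C)$ is the set of formulas obtained from formulas of $\Sigma$ by replacing finitely many free variables by constants from $C$. $\mathcal{P}(\mathcal{M},\Sigma)$ is the set of finite sets $\{\phi_1<r_1,\dots,\phi_n<r_n\}$ with $\phi_i\in\Sigma(C)$ sentences such that some $M\in\mathcal{M}(C)$ satisfies $\phi_i^M<r_i$ for all $i$, ordered by reverse inclusion. For a condition $p$ and a sentence $\varphi\in\Sigma(C)$, $H_p(\varphi)=\min\{r\le1:(\varphi<r)\in p\}$ if nonempty, else $1$; $H^w_p(\varphi)=\sup_{q\le p}\inf_{q'\le q}H_{q'}(\varphi)$. *)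

(* Defs.v *)
From HB Require Import structures.
From mathcomp Require Import all_boot all_order all_algebra.
From mathcomp Require Import boolp classical_sets reals.
From Stdlib Require List.
Set Implicit Arguments. Unset Strict Implicit. Unset Printing Implicit Defensive.
Import Order.TTheory GRing.Theory Num.Theory.
Local Open Scope classical_set_scope.
Local Open Scope ring_scope.

Record signature (R : realType) := Signature {
  fsym : countType;
  psym : countType;
  farity : fsym -> nat;
  parity : psym -> nat;
  fmod : fsym -> R -> R;                 (* moduli of uniform continuity *)
  pmod : psym -> R -> R;
  fmod_pos : forall f e, 0 < e -> 0 < fmod f e;
  pmod_pos : forall P e, 0 < e -> 0 < pmod P e }.

Inductive term (R : realType) (L : signature R) : Type :=
| TVar : nat -> term L
| TConst : nat -> term L
| TApp (f : fsym L) : ('I_(farity f) -> term L) -> term L.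

Inductive formula (R : realType) (L : signature R) : Type :=
| FDist : term L -> term L -> formula L
| FPred (P : psym L) : ('I_(parity P) -> term L) -> formula L
| FNeg : formula L -> formula L
| FHalf : formula L -> formula L
| FPlus : formula L -> formula L -> formula L
| FAnd : (nat -> formula L) -> formula L
| FInf : nat -> formula L -> formula L.

Arguments TVar {R L}. Arguments TConst {R L}.
Arguments FNeg {R L}. Arguments FHalf {R L}. Arguments FPlus {R L}.
Arguments FAnd {R L}. Arguments FInf {R L}. Arguments FDist {R L}.
Arguments FPred {R L} P _. Arguments TApp {R L} f _.

Fixpoint tfv R (L : signature R) (t : term L) (x : nat) : Prop :=
  match t with
  | TVar n => n = x
  | TConst _ => False
  | TApp f ts => exists i, tfv (ts i) x
  end.

Fixpoint ffv R (L : signature R) (phi : formula L) (x : nat) : Prop :=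
  match phi with
  | FDist t1 t2 => tfv t1 x \/ tfv t2 x
  | FPred P ts => exists i, tfv (ts i) x
  | FNeg p => ffv p x
  | FHalf p => ffv p x
  | FPlus p q => ffv p x \/ ffv q x
  | FAnd Ph => exists n, ffv (Ph n) x
  | FInf y p => x <> y /\ ffv p x
  end.

Fixpoint tconst R (L : signature R) (t : term L) (c : nat) : Prop :=
  match t with
  | TVar _ => False
  | TConst d => d = c
  | TApp f ts => exists i, tconst (ts i) c
  end.

Fixpoint fconst R (L : signature R) (phi : formula L) (c : nat) : Prop :=
  match phi with
  | FDist t1 t2 => tconst t1 c \/ tconst t2 c
  | FPred P ts => exists i, tconst (ts i) c
  | FNeg p => fconst p c
  | FHalf p => fconst p c
  | FPlus p q => fconst p c \/ fconst q c
  | FAnd Ph => exists n, fconst (Ph n) c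
  | FInf _ p => fconst p c
  end.

Definition sentence R (L : signature R) (phi : formula L) := forall x, ~ ffv phi x.

Definition Lformula R (L : signature R) (phi : formula L) :=
  (forall c, ~ fconst phi c) /\ exists N, forall x, ffv phi x -> (x < N)%N.

Definition Cfree_term R (L : signature R) (t : term L) := forall c, ~ tconst t c.

Definition atomicL R (L : signature R) (phi : formula L) :=
  (exists t1 t2, phi = FDist t1 t2 /\ Cfree_term t1 /\ Cfree_term t2) \/
  (exists P ts, phi = FPred P ts /\ forall i, Cfree_term (ts i)).

Definition imm_sub R (L : signature R) (psi phi : formula L) : Prop :=
  match phi with
  | FNeg p => psi = p
  | FHalf p => psi = p
  | FPlus p q => psi = p \/ psi = q
  | FAnd Ph => exists n, psi = Ph n
  | FInf _ p => psi = p
  | _ => False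
  end.

Definition subformula_closed R (L : signature R) (S : set (formula L)) :=
  forall phi psi, S phi -> imm_sub psi phi -> S psi.

(* countable fragment L_A of L_{omega1,omega} *)
Definition is_fragment R (L : signature R) (A : set (formula L)) :=
  [/\ exists enc : formula L -> nat,
        forall p q, A p -> A q -> enc p = enc q -> p = q,
      forall p, A p -> Lformula p,
      forall p, atomicL p -> A p,
      subformula_closed A &
      [/\ forall p, A p -> A (FNeg p),
          forall p, A p -> A (FHalf p),
          forall p q, A p -> A q -> A (FPlus p q),
          forall p q, A p -> A q -> A (FAnd (fun n => if n == 0%N then p else q)) &
          forall x p, A p -> A (FInf x p)]].

Fixpoint tsubst R (L : signature R) (x c : nat) (t : term L) : term L :=
  match t with
  | TVar n => if n == x then TConst c else TVar n
  | TConst d => TConst d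
  | TApp f ts => TApp f (fun i => tsubst x c (ts i))
  end.

Fixpoint fsubst R (L : signature R) (x c : nat) (phi : formula L) : formula L :=
  match phi with
  | FDist t1 t2 => FDist (tsubst x c t1) (tsubst x c t2)
  | FPred P ts => FPred P (fun i => tsubst x c (ts i))
  | FNeg p => FNeg (fsubst x c p)
  | FHalf p => FHalf (fsubst x c p)
  | FPlus p q => FPlus (fsubst x c p) (fsubst x c q)
  | FAnd Ph => FAnd (fun n => fsubst x c (Ph n))
  | FInf y p => if y == x then FInf y p else FInf y (fsubst x c p)
  end.

Definition SigmaC R (L : signature R) (S : set (formula L)) (psi : formula L) :=
  exists (phi : formula L) (s : seq (nat * nat)),
    S phi /\ psi = foldr (fun xc p => fsubst xc.1 xc.2 p) phi s.

Unset Implicit Arguments.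
Record structure (R : realType) (L : signature R) := Structure {
  carrier :> Type;
  inhab : carrier;
  dist : carrier -> carrier -> R;
  funI : forall f : fsym L, ('I_(farity f) -> carrier) -> carrier;
  predI : forall P : psym L, ('I_(parity P) -> carrier) -> R;
  dist_range : forall x y, 0 <= dist x y <= 1;
  dist_sep : forall x y, dist x y = 0 <-> x = y;
  dist_sym : forall x y, dist x y = dist y x;
  dist_tri : forall x y z, dist x z <= dist x y + dist y z;
  dist_complete : forall u : nat -> carrier,
    (forall e, 0 < e -> exists N, forall m n, (N <= m)%N -> (N <= n)%N -> dist (u m) (u n) < e) ->
    exists l, forall e, 0 < e -> exists N, forall n, (N <= n)%N -> dist (u n) l < e;
  pred_range : forall P xs, 0 <= predI P xs <= 1;
  fun_ucont : forall f e xs ys, 0 < e ->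
    (forall i, dist (xs i) (ys i) < fmod f e) -> dist (funI f xs) (funI f ys) <= e;
  pred_ucont : forall P e xs ys, 0 < e ->
    (forall i, dist (xs i) (ys i) < pmod P e) -> `|predI P xs - predI P ys| <= e }.
Arguments funI {R L} s f _. Arguments predI {R L} s P _. Arguments dist {R L} s _ _.
Arguments inhab {R L} s. Arguments structure {R} L.
Set Implicit Arguments.

Fixpoint teval R (L : signature R) (M : structure L) (a env : nat -> M) (t : term L) : M :=
  match t with
  | TVar n => env n
  | TConst c => a c
  | TApp f ts => funI M f (fun i => teval a env (ts i))
  end.

Definition upd (T : Type) (env : nat -> T) (x : nat) (m : T) : nat -> T :=
  fun y => if y == x then m else env y.

Fixpoint feval R (L : signature R) (M : structure L) (a env : nat -> M) (phi : formula L) : R :=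
  match phi with
  | FDist t1 t2 => dist M (teval a env t1) (teval a env t2)
  | FPred P ts => predI M P (fun i => teval a env (ts i))
  | FNeg p => 1 - feval a env p
  | FHalf p => feval a env p / 2
  | FPlus p q => Num.min (feval a env p + feval a env q) 1
  | FAnd Ph => inf (range (fun n => feval a env (Ph n)))
  | FInf x p => inf (range (fun m : M => feval a (upd env x m) p))
  end.

(* value of a sentence (independent of the variable assignment) *)
Definition sval R (L : signature R) (M : structure L) (a : nat -> M) (phi : formula L) : R :=
  feval a (fun _ => inhab M) phi.

(* a condition is a finite set {phi_1 < r_1, ..., phi_n < r_n}, as a list of pairs *)
Definition cond R (L : signature R) := seq (formula L * R).

Definition is_condition R (L : signature R) (Mcl : set (structure L))
    (S : set (formula L)) (p : cond L) :=
  (forall e, List.In e p -> SigmaC S e.1 /\ sentence e.1) /\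
  exists (M : structure L) (C0 : seq nat) (a : nat -> M),
    [/\ Mcl M,
        forall e c, List.In e p -> fconst e.1 c -> c \in C0 &
        forall e, List.In e p -> sval a e.1 < e.2].

Definition cle R (L : signature R) (q p : cond L) := forall e, List.In e p -> List.In e q.

Definition below R (L : signature R) (Mcl : set (structure L)) (S : set (formula L))
    (p : cond L) : set (cond L) :=
  [set q | is_condition Mcl S q /\ cle q p].

Definition H R (L : signature R) (p : cond L) (phi : formula L) : R :=
  if pselect (exists r, r <= 1 /\ List.In (phi, r) p)
  then inf [set r | r <= 1 /\ List.In (phi, r) p]   (* a finite set: inf = min *)
  else 1.

Definition Hw R (L : signature R) (Mcl : set (structure L)) (S : set (formula L))
    (p : cond L) (phi : formula L) : R :=
  sup [set inf [set H q' phi | q' in below Mcl S q] | q in below Mcl S p].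

(* Main.v *)
Require Import Defs.
From HB Require Import structures.
From mathcomp Require Import all_boot all_order all_algebra.
From mathcomp Require Import boolp classical_sets reals.
From mathcomp Require Import lra.
From Stdlib Require List.
Import Order.TTheory GRing.Theory Num.Theory.
Local Open Scope classical_set_scope.
Local Open Scope ring_scope.
Set Implicit Arguments. Unset Strict Implicit. Unset Printing Implicit Defensive.
Definition sf (R : realType) (L : signature R) (xc : nat * nat) (p : formula L) :=
  fsubst xc.1 xc.2 p.

Lemma tsubst_const (R : realType) (L : signature R) x c d (t : term L) :
  tconst (tsubst x c t) d -> tconst t d \/ d = c.
Proof.
elim: t => [n|n|f ts IH] /=.
- by case: eqP => _ /=; [right|].
- by left.
- by case=> i /IH [h|h]; [left; exists i|right].
Qed.

Lemma fsubst_const (R : realType) (L : signature R) x c d (phi : formula L) :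
  fconst (fsubst x c phi) d -> fconst phi d \/ d = c.
Proof.
elim: phi => [t1 t2|P ts|p IH|p IH|p IHp q IHq|Ph IH|y p IH] /=.
- by case=> /tsubst_const [h|h]; auto.
- by case=> i /tsubst_const [h|h]; [left; exists i|right].
- exact: IH.
- exact: IH.
- by case=> [/IHp|/IHq] [h|h]; auto.
- by case=> n /IH [h|h]; [left; exists n|right].
- by case: eqP => _ /=; [left|move/IH].
Qed.

Lemma foldr_const (R : realType) (L : signature R) (s : seq (nat * nat)) (phi : formula L) d :
  fconst (foldr (@sf R L) phi s) d -> fconst phi d \/ d \in map snd s.
Proof.
elim: s => [|[x c] s IH] /=; first by left.
move/fsubst_const => [/IH [h|h]|->]; first by left.
- by right; rewrite in_cons h orbT.
- by right; rewrite in_cons eqxx.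
Qed.

Lemma tsubst_fv (R : realType) (L : signature R) x c (t : term L) y :
  tfv (tsubst x c t) y -> tfv t y /\ y <> x.
Proof.
elim: t => [n|n|f ts IH] /=.
- by case: eqP => //= nx ny; subst; split.
- by [].
- by case=> i /IH [h1 h2]; split=> //; exists i.
Qed.

Lemma fsubst_fv (R : realType) (L : signature R) x c (phi : formula L) y :
  ffv (fsubst x c phi) y -> ffv phi y /\ y <> x.
Proof.
elim: phi => [t1 t2|P ts|p IH|p IH|p IHp q IHq|Ph IH|z p IH] /=.
- by case=> /tsubst_fv [h1 h2]; split=> //; [left|right].
- by case=> i /tsubst_fv [h1 h2]; split=> //; exists i.
- exact: IH.
- exact: IH.
- by case=> [/IHp|/IHq] [h1 h2]; split=> //; [left|right].
- by case=> n /IH [h1 h2]; split=> //; exists n.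
- case: eqP => [->|_] /= [yz h]; first by split.
  by case: (IH h) => h1 h2; split.
Qed.

Lemma foldr_Neg (R : realType) (L : signature R) (s : seq (nat * nat)) (phi0 phi : formula L) :
  foldr (@sf R L) phi0 s = FNeg phi -> exists phi1, phi0 = FNeg phi1 /\ phi = foldr (@sf R L) phi1 s.
Proof.
elim: s phi => [|[x c] s IH] phi /=; first by move=> ->; exists phi.
rewrite /sf /=; case E: (foldr _ phi0 s) => [||p|||Ph|z p] //=; try by case: eqP.
case=> <-; have [phi1 [-> ->]] := IH _ E; by exists phi1.
Qed.

Lemma foldr_Half (R : realType) (L : signature R) (s : seq (nat * nat)) (phi0 phi : formula L) :
  foldr (@sf R L) phi0 s = FHalf phi -> exists phi1, phi0 = FHalf phi1 /\ phi = foldr (@sf R L) phi1 s.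
Proof.
elim: s phi => [|[x c] s IH] phi /=; first by move=> ->; exists phi.
rewrite /sf /=; case E: (foldr _ phi0 s) => [|||p||Ph|z p] //=; try by case: eqP.
case=> <-; have [phi1 [-> ->]] := IH _ E; by exists phi1.
Qed.

Lemma foldr_Plus (R : realType) (L : signature R) (s : seq (nat * nat)) (phi0 phi psi : formula L) :
  foldr (@sf R L) phi0 s = FPlus phi psi -> exists phi1 psi1, phi0 = FPlus phi1 psi1 /\
    phi = foldr (@sf R L) phi1 s /\ psi = foldr (@sf R L) psi1 s.
Proof.
elim: s phi psi => [|[x c] s IH] phi psi /=; first by move=> ->; exists phi, psi.
rewrite /sf /=; case E: (foldr _ phi0 s) => [||||p q|Ph|z p] //=; try by case: eqP.
case=> <- <-; have [phi1 [psi1 [-> [-> ->]]]] := IH _ _ E; by exists phi1, psi1.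
Qed.

Lemma foldr_And (R : realType) (L : signature R) (s : seq (nat * nat)) (phi0 : formula L) Phi :
  foldr (@sf R L) phi0 s = FAnd Phi -> exists Phi1, phi0 = FAnd Phi1 /\
    forall n, Phi n = foldr (@sf R L) (Phi1 n) s.
Proof.
elim: s Phi => [|[x c] s IH] Phi /=; first by move=> ->; exists Phi.
rewrite /sf /=; case E: (foldr _ phi0 s) => [|||||Ph|z p] //=; try by case: eqP.
case=> <-; have [Phi1 [-> HP]] := IH _ E; exists Phi1; split=> // n.
by rewrite HP.
Qed.

Lemma foldr_Inf (R : realType) (L : signature R) (s : seq (nat * nat)) (phi0 : formula L) x phi :
  foldr (@sf R L) phi0 s = FInf x phi -> exists phi1, phi0 = FInf x phi1 /\
    phi = foldr (@sf R L) phi1 (filter (fun yc => yc.1 != x) s).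
Proof.
elim: s phi => [|[y c] s IH] phi /=; first by move=> ->; exists phi.
rewrite /sf /=; case E: (foldr _ phi0 s) => [||||||z p] //=.
case: eqP => [zy|/eqP zy] [zx hp].
  subst; rewrite eqxx /=; have [phi1 [-> ->]] := IH _ E; by exists phi1.
subst; rewrite eq_sym zy /=; have [phi1 [-> ->]] := IH _ E; by exists phi1.
Qed.
Lemma inf_range_bnd (R : realType) (T : Type) (f : T -> R) (t : T) :
  (forall x, 0 <= f x <= 1) -> 0 <= inf (range f) <= 1 /\ forall x, inf (range f) <= f x.
Proof.
move=> hf.
have lb : has_lbound (range f) by exists 0 => _ [y _ <-]; case/andP: (hf y).
have ne : range f !=set0 by exists (f t), t.
have le : forall x, inf (range f) <= f x by move=> x; apply: ge_inf => //; exists x.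
split=> //; apply/andP; split.
- by apply: lb_le_inf => // _ [y _ <-]; case/andP: (hf y).
- by apply: le_trans (le t) _; case/andP: (hf t).
Qed.

Lemma feval_range (R : realType) (L : signature R) (M : structure L) (a env : nat -> M)
  (phi : formula L) : 0 <= feval a env phi <= 1.
Proof.
elim: phi env => [t1 t2|P ts|p IH|p IH|p IHp q IHq|Ph IH|z p IH] env /=.
- exact: dist_range.
- exact: pred_range.
- by have /andP[h1 h2] := IH env; apply/andP; split; lra.
- by have /andP[h1 h2] := IH env; apply/andP; split; lra.
- have /andP[h1 h2] := IHp env; have /andP[h3 h4] := IHq env.
  apply/andP; split; first by rewrite le_min; apply/andP; split; lra.
  by rewrite ge_min lexx orbT.
- by have [] := @inf_range_bnd R nat (fun n => feval a env (Ph n)) 0%N (fun n => IH n env).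
- by have [] := @inf_range_bnd R M (fun m => feval a (upd env z m) p) (inhab M)
     (fun m => IH (upd env z m)).
Qed.

Lemma teval_ext (R : realType) (L : signature R) (M : structure L) (a a' env : nat -> M)
  (t : term L) : (forall d, tconst t d -> a d = a' d) -> teval a env t = teval a' env t.
Proof.
elim: t => [n|n|f ts IH] /= h //; first exact: h.
congr (funI M f _); apply/funext => i; apply: IH => d hd; apply: h; by exists i.
Qed.

Lemma feval_ext (R : realType) (L : signature R) (M : structure L) (a a' : nat -> M)
  (phi : formula L) : (forall d, fconst phi d -> a d = a' d) ->
  forall env, feval a env phi = feval a' env phi.
Proof.
elim: phi => [t1 t2|P ts|p IH|p IH|p IHp q IHq|Ph IH|z p IH] /= h env.
- by congr (dist M _ _); apply: teval_ext => d hd; apply: h; auto.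
- congr (Defs.predI M P _); apply/funext => i; apply: teval_ext => d hd; apply: h; by exists i.
- by rewrite IH.
- by rewrite IH.
- by rewrite IHp ?IHq // => d hd; apply: h; auto.
- do 2 f_equal; apply/funext => n; apply: (IH n) => d hd; apply: h; by exists n.
- do 2 f_equal; apply/funext => m; exact: IH.
Qed.

Lemma upd_same (T : Type) (env : nat -> T) x m m' : upd (upd env x m') x m = upd env x m.
Proof. by apply/funext => y; rewrite /upd; case: eqP. Qed.

Lemma upd_comm (T : Type) (env : nat -> T) x y m m' : x != y ->
  upd (upd env x m') y m = upd (upd env y m) x m'.
Proof.
move=> xy; apply/funext => z; rewrite /upd /=.
by have [->|zy] := eqVneq z y; first by rewrite eq_sym (negbTE xy).
Qed.

Lemma teval_subst (R : realType) (L : signature R) (M : structure L) (a env : nat -> M) x c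
  (t : term L) : teval a env (tsubst x c t) = teval a (upd env x (a c)) t.
Proof.
elim: t => [n|n|f ts IH] //=; first by rewrite /upd; case: eqP.
by congr (funI M f _); apply/funext => i; apply: IH.
Qed.

Lemma feval_subst (R : realType) (L : signature R) (M : structure L) (a : nat -> M) x c
  (phi : formula L) : forall env,
  feval a env (fsubst x c phi) = feval a (upd env x (a c)) phi.
Proof.
elim: phi => [t1 t2|P ts|p IH|p IH|p IHp q IHq|Ph IH|z p IH] env /=.
- by rewrite !teval_subst.
- by congr (Defs.predI M P _); apply/funext => i; rewrite teval_subst.
- by rewrite IH.
- by rewrite IH.
- by rewrite IHp IHq.
- by do 2 f_equal; apply/funext => n; rewrite IH.
- case: eqP => [->|/eqP zx] /=.
    by do 2 f_equal; apply/funext => m; rewrite upd_same.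
  by do 2 f_equal; apply/funext => m; rewrite IH upd_comm // eq_sym.
Qed.
Lemma list_lb (R : realType) (T : Type) (p : seq (T * R)) :
  exists m : R, forall e, List.In e p -> m <= e.2.
Proof.
elim: p => [|e p [m hm]]; first by exists 0.
exists (Num.min e.2 m) => e' /= [<-|/hm h]; first by rewrite ge_min lexx.
by rewrite ge_min h orbT.
Qed.

Lemma H_le_entry (R : realType) (L : signature R) (r : cond L) th s :
  List.In (th, s) r -> H r th <= s.
Proof.
rewrite /H; case: pselect => [[r0 [h0 i0]]|nex] hin.
  have [m hm] := list_lb r.
  have lb : has_lbound [set r1 | r1 <= 1 /\ List.In (th, r1) r].
    by exists m => x [_ /hm].
  have [s1|s1] := leP s 1.
    by apply: ge_inf => //; split.
  apply: (le_trans _ (ltW s1)); apply: (le_trans _ h0); exact: ge_inf.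
have [s1|s1] := leP s 1; last exact: ltW.
by exfalso; apply: nex; exists s.
Qed.

Lemma H_le1 (R : realType) (L : signature R) (r : cond L) th : H r th <= 1.
Proof.
case: (pselect (exists r0, r0 <= 1 /\ List.In (th, r0) r)) => [[r0 [h0 i0]]|nex].
  exact: le_trans (H_le_entry i0) h0.
by rewrite /H; case: pselect.
Qed.

Lemma H_ge (R : realType) (L : signature R) (r : cond L) th (b : R) : b <= 1 ->
  (forall s, s <= 1 -> List.In (th, s) r -> b <= s) -> b <= H r th.
Proof.
move=> b1 hb; rewrite /H; case: pselect => [[r0 [h0 i0]]|nex] //.
by apply: lb_le_inf; [exists r0|move=> x [x1 xi]; exact: hb].
Qed.

Definition wit (R : realType) (L : signature R) (Mcl : set (structure L)) (q : cond L)
  (M : structure L) (C0 : seq nat) (a : nat -> M) :=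
  [/\ Mcl M, forall e c, List.In e q -> fconst e.1 c -> c \in C0 &
      forall e, List.In e q -> Defs.sval a e.1 < e.2].
Arguments wit {R L} Mcl q M C0 a.

Lemma cond_wit (R : realType) (L : signature R) (Mcl : set (structure L)) S (q : cond L) :
  is_condition Mcl S q -> exists M C0 a, wit Mcl q M C0 a.
Proof. by case=> _ [M [C0 [a [h1 h2 h3]]]]; exists M, C0, a. Qed.

Lemma sval_range (R : realType) (L : signature R) (M : structure L) (a : nat -> M) th :
  0 <= Defs.sval a th <= 1.
Proof. exact: feval_range. Qed.

Lemma sval_le_H (R : realType) (L : signature R) Mcl (q : cond L) (M : structure L) C0 (a : nat -> M) th :
  wit Mcl q M C0 a -> Defs.sval a th <= H q th.
Proof.
case=> _ _ h3; apply: H_ge; first by case/andP: (sval_range a th).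
by move=> s _ /h3 /ltW.
Qed.

Lemma H_ge0 (R : realType) (L : signature R) Mcl S (q : cond L) th :
  is_condition Mcl S q -> 0 <= H q th.
Proof.
move/cond_wit => [M [C0 [a w]]]; apply: le_trans (sval_le_H th w).
by case/andP: (sval_range a th).
Qed.

Lemma H_mono (R : realType) (L : signature R) (q q' : cond L) th :
  cle q' q -> H q' th <= H q th.
Proof.
move=> c; apply: H_ge; first exact: H_le1.
by move=> s _ /c /H_le_entry.
Qed.

Lemma SigmaC_consts (R : realType) (L : signature R) (S : set (formula L)) th :
  (forall phi, S phi -> forall c, ~ fconst phi c) -> SigmaC S th ->
  exists cs : seq nat, forall c, fconst th c -> c \in cs.
Proof.
move=> hnc [phi0 [s [S0 ->]]]; exists (map snd s) => c.
change (fconst (foldr (@sf R L) phi0 s) c -> c \in [seq i.2 | i <- s]).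
by case/foldr_const => // /(hnc _ S0).
Qed.

Lemma add_entry (R : realType) (L : signature R) Mcl (S : set (formula L)) (q : cond L)
  (M : structure L) C0 (a : nat -> M) th t :
  (forall phi, S phi -> forall c, ~ fconst phi c) ->
  is_condition Mcl S q -> wit Mcl q M C0 a -> SigmaC S th -> sentence th ->
  Defs.sval a th < t ->
  [/\ is_condition Mcl S ((th, t) :: q), cle ((th, t) :: q) q &
      exists C1, wit Mcl ((th, t) :: q) M C1 a].
Proof.
move=> hnc [hq _] [w1 w2 w3] hS hs ht.
have [cs hcs] := SigmaC_consts hnc hS.
have w : wit Mcl ((th, t) :: q) M (C0 ++ cs) a.
  split=> //.
  - move=> e c /= [<- /hcs|i /(w2 _ _ i)]; by rewrite mem_cat => ->; rewrite ?orbT.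
  - by move=> e /= [<-|/w3].
split; [|by move=> e i; right|by exists (C0 ++ cs)].
split; first by move=> e /= [<-|/hq].
by case: w => *; exists M, (C0 ++ cs), a.
Qed.

Lemma fresh (C0 : seq nat) : exists c, c \notin C0.
Proof.
have h : forall c, c \in C0 -> (c <= sumn C0)%N.
  elim: C0 => [|d C IH] c //=; rewrite in_cons => /orP[/eqP ->|/IH h].
    exact: leq_addr.
  by apply: leq_trans h (leq_addl _ _).
by exists (sumn C0).+1; apply/negP => /h; rewrite ltnn.
Qed.
Lemma sup_img_le (R : realType) (T : Type) (A : set T) (f : T -> R) b :
  (exists x, A x) -> (forall x, A x -> f x <= b) -> sup [set f x | x in A] <= b.
Proof. by move=> [x Ax] h; apply: ge_sup; [exists (f x), x|move=> _ [y Ay <-]; exact: h]. Qed.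

Lemma le_sup_img (R : realType) (T : Type) (A : set T) (f : T -> R) B x :
  (forall x, A x -> f x <= B) -> A x -> f x <= sup [set f x | x in A].
Proof.
move=> h Ax; apply: ub_le_sup; last by exists x.
by exists B => _ [y Ay <-]; exact: h.
Qed.

Lemma inf_img_le (R : realType) (T : Type) (A : set T) (f : T -> R) B x :
  (forall x, A x -> B <= f x) -> A x -> inf [set f x | x in A] <= f x.
Proof.
move=> h Ax; apply: ge_inf; last by exists x.
by exists B => _ [y Ay <-]; exact: h.
Qed.

Lemma le_inf_img (R : realType) (T : Type) (A : set T) (f : T -> R) b :
  (exists x, A x) -> (forall x, A x -> b <= f x) -> b <= inf [set f x | x in A].
Proof. by move=> [x Ax] h; apply: lb_le_inf; [exists (f x), x|move=> _ [y Ay <-]; exact: h]. Qed.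

Definition gg (R : realType) (L : signature R) (Mcl : set (structure L)) (S : set (formula L))
  (q : cond L) (th : formula L) : R := inf [set H q' th | q' in below Mcl S q].

Lemma HwE (R : realType) (L : signature R) Mcl S (p : cond L) th :
  Hw Mcl S p th = sup [set gg Mcl S q th | q in below Mcl S p].
Proof. by []. Qed.

Section G.
Local Notation bw := below.

Lemma below_refl (R : realType) (L : signature R) Mcl S (q : cond L) :
  is_condition Mcl S q -> below Mcl S q q.
Proof. by split. Qed.

Lemma below_trans (R : realType) (L : signature R) Mcl S (q r r' : cond L) :
  below Mcl S q r -> below Mcl S r r' -> below Mcl S q r'.
Proof. by move=> [_ c1] [h c2]; split=> // e /c1 /c2. Qed.


Lemma below_cond (R : realType) (L : signature R) Mcl S (q r : cond L) :
  below Mcl S q r -> is_condition Mcl S r.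
Proof. by case. Qed.

Lemma g_lb (R : realType) (L : signature R) Mcl S (q r : cond L) th :
  below Mcl S q r -> gg Mcl S q th <= H r th.
Proof. by move=> b; apply: (inf_img_le (B := 0)) b => x bx; exact: H_ge0 (below_cond bx). Qed.

Lemma g_ge (R : realType) (L : signature R) Mcl S (q : cond L) th b :
  is_condition Mcl S q -> (forall r, below Mcl S q r -> b <= H r th) -> b <= gg Mcl S q th.
Proof. by move=> hq; apply: le_inf_img; exists q; exact: below_refl. Qed.

Lemma g_le1 (R : realType) (L : signature R) Mcl S (q : cond L) th :
  is_condition Mcl S q -> gg Mcl S q th <= 1.
Proof. by move=> hq; apply: le_trans (g_lb th (below_refl hq)) (H_le1 _ _). Qed.

Lemma g_ge0 (R : realType) (L : signature R) Mcl S (q : cond L) th :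
  is_condition Mcl S q -> 0 <= gg Mcl S q th.
Proof. by move=> hq; apply: g_ge => // r br; exact: H_ge0 (below_cond br). Qed.

Lemma g_mono (R : realType) (L : signature R) Mcl S (q q' : cond L) th :
  below Mcl S q q' -> gg Mcl S q th <= gg Mcl S q' th.
Proof.
move=> b; apply: g_ge; first exact: below_cond b.
by move=> r br; apply: g_lb; exact: below_trans br.
Qed.

Lemma Hw_ge (R : realType) (L : signature R) Mcl S (p q : cond L) th :
  below Mcl S p q -> gg Mcl S q th <= Hw Mcl S p th.
Proof. by move=> b; apply: (le_sup_img (B := 1)) b => x bx; exact: g_le1 (below_cond bx). Qed.

Lemma Hw_le (R : realType) (L : signature R) Mcl S (p : cond L) th b :
  is_condition Mcl S p -> (forall q, below Mcl S p q -> gg Mcl S q th <= b) -> Hw Mcl S p th <= b.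
Proof. by move=> hp; apply: sup_img_le; exists p; exact: below_refl. Qed.

Lemma g_le_Hw (R : realType) (L : signature R) Mcl S (q : cond L) th :
  is_condition Mcl S q -> gg Mcl S q th <= Hw Mcl S q th.
Proof. by move=> hq; apply: Hw_ge; exact: below_refl. Qed.

Lemma Hw_ge0 (R : realType) (L : signature R) Mcl S (q : cond L) th :
  is_condition Mcl S q -> 0 <= Hw Mcl S q th.
Proof. by move=> hq; apply: le_trans (g_ge0 th hq) (g_le_Hw th hq). Qed.

Lemma Hw_le1 (R : realType) (L : signature R) Mcl S (q : cond L) th :
  is_condition Mcl S q -> Hw Mcl S q th <= 1.
Proof. by move=> hq; apply: Hw_le => // r br; exact: g_le1 (below_cond br). Qed.

Lemma Hw_entry (R : realType) (L : signature R) Mcl S (r : cond L) th t :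
  is_condition Mcl S r -> List.In (th, t) r -> Hw Mcl S r th <= t.
Proof.
move=> hr hin; apply: Hw_le => // q bq.
apply: le_trans (g_lb th (below_refl (below_cond bq))) _.
by apply: H_le_entry; case: bq => _ /(_ _ hin).
Qed.

Lemma Hw_mono (R : realType) (L : signature R) Mcl S (p q : cond L) th :
  below Mcl S p q -> Hw Mcl S q th <= Hw Mcl S p th.
Proof.
move=> b; apply: Hw_le; first exact: below_cond b.
by move=> r br; apply: Hw_ge; exact: below_trans br.
Qed.
End G.
Lemma SigmaC_Neg (R : realType) (L : signature R) (S : set (formula L)) phi :
  subformula_closed S -> SigmaC S (FNeg phi) -> SigmaC S phi.
Proof.
move=> hsc [phi0 [s [S0 E]]].
have E' : foldr (@sf R L) phi0 s = FNeg phi by rewrite E.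
have [phi1 [e1 e2]] := foldr_Neg E'; subst phi0.
by exists phi1, s; split; [exact: (hsc _ _ S0)|].
Qed.

Lemma SigmaC_Half (R : realType) (L : signature R) (S : set (formula L)) phi :
  subformula_closed S -> SigmaC S (FHalf phi) -> SigmaC S phi.
Proof.
move=> hsc [phi0 [s [S0 E]]].
have E' : foldr (@sf R L) phi0 s = FHalf phi by rewrite E.
have [phi1 [e1 e2]] := foldr_Half E'; subst phi0.
by exists phi1, s; split; [exact: (hsc _ _ S0)|].
Qed.

Lemma SigmaC_Plus (R : realType) (L : signature R) (S : set (formula L)) phi psi :
  subformula_closed S -> SigmaC S (FPlus phi psi) -> SigmaC S phi /\ SigmaC S psi.
Proof.
move=> hsc [phi0 [s [S0 E]]].
have E' : foldr (@sf R L) phi0 s = FPlus phi psi by rewrite E.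
have [phi1 [psi1 [e1 [e2 e3]]]] := foldr_Plus E'; subst phi0.
split; [exists phi1, s|exists psi1, s]; split=> //; apply: (hsc _ _ S0); by [left|right].
Qed.

Lemma SigmaC_And (R : realType) (L : signature R) (S : set (formula L)) Phi :
  subformula_closed S -> SigmaC S (FAnd Phi) -> forall n, SigmaC S (Phi n).
Proof.
move=> hsc [phi0 [s [S0 E]]] n.
have E' : foldr (@sf R L) phi0 s = FAnd Phi by rewrite E.
have [Phi1 [e1 e2]] := foldr_And E'; subst phi0.
exists (Phi1 n), s; split; last exact: e2.
by apply: (hsc _ _ S0); exists n.
Qed.

Lemma SigmaC_Inf (R : realType) (L : signature R) (S : set (formula L)) x phi :
  subformula_closed S -> SigmaC S (FInf x phi) -> forall c, SigmaC S (fsubst x c phi).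
Proof.
move=> hsc [phi0 [s [S0 E]]] c.
have E' : foldr (@sf R L) phi0 s = FInf x phi by rewrite E.
have [phi1 [e1 e2]] := foldr_Inf E'; subst phi0.
exists phi1, ((x, c) :: filter (fun yc => yc.1 != x) s); split; first exact: (hsc _ _ S0).
by rewrite e2.
Qed.

Lemma sentence_Inf (R : realType) (L : signature R) x (phi : formula L) c :
  sentence (FInf x phi) -> sentence (fsubst x c phi).
Proof. by move=> hs y /fsubst_fv [h1 h2]; apply: (hs y). Qed.

Lemma part1 (R : realType) (L : signature R) Mcl S (p : cond L) th :
  is_condition Mcl S p ->
     Hw Mcl S p th = sup [set Hw Mcl S q th | q in below Mcl S p] /\
     Hw Mcl S p th =
       sup [set inf [set Hw Mcl S q' th | q' in below Mcl S q] | q in below Mcl S p].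
Proof.
move=> hp.
have mHw : forall q, is_condition Mcl S q -> inf [set Hw Mcl S q' th | q' in below Mcl S q] <= Hw Mcl S q th.
  move=> q hq; apply: (inf_img_le (B := 0)); last exact: below_refl.
  by move=> r br; apply: Hw_ge0 (below_cond br).
have mge0 : forall q, is_condition Mcl S q -> 0 <= inf [set Hw Mcl S q' th | q' in below Mcl S q].
  by move=> q hq; apply: le_inf_img; [exists q; exact: below_refl|move=> r br; exact: Hw_ge0 (below_cond br)].
split; apply/eqP; rewrite eq_le; apply/andP; split.
- apply: Hw_le => // q bq; apply: le_trans (g_le_Hw th (below_cond bq)) _.
  by apply: (le_sup_img (B := 1)) bq => r br; exact: Hw_le1 (below_cond br).
- by apply: sup_img_le; [exists p; exact: below_refl|move=> q bq; exact: Hw_mono].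
- apply: Hw_le => // q bq; apply: le_trans _ (le_sup_img (B := 1) _ bq); last first.
    by move=> r br; apply: le_trans (mHw _ (below_cond br)) (Hw_le1 _ (below_cond br)).
  apply: le_inf_img; first by exists q; exact: below_refl (below_cond bq).
  by move=> r br; apply: le_trans (g_mono th br) (g_le_Hw _ (below_cond br)).
- apply: sup_img_le; first by exists p; exact: below_refl.
  by move=> q bq; apply: le_trans (mHw _ (below_cond bq)) (Hw_mono _ bq).
Qed.
Lemma svalN (R : realType) (L : signature R) (M : structure L) (a : nat -> M) phi :
  Defs.sval a (FNeg phi) = 1 - Defs.sval a phi.
Proof. by []. Qed.
Lemma svalHalf (R : realType) (L : signature R) (M : structure L) (a : nat -> M) phi :
  Defs.sval a (FHalf phi) = Defs.sval a phi / 2.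
Proof. by []. Qed.
Lemma svalP (R : realType) (L : signature R) (M : structure L) (a : nat -> M) phi psi :
  Defs.sval a (FPlus phi psi) = Num.min (Defs.sval a phi + Defs.sval a psi) 1.
Proof. by []. Qed.

Lemma H_le_head (R : realType) (L : signature R) (r : cond L) th s :
  H ((th, s) :: r) th <= s.
Proof. by apply: H_le_entry; left. Qed.

Lemma in_below (R : realType) (L : signature R) Mcl S (r : cond L) e :
  is_condition Mcl S (e :: r) -> below Mcl S r (e :: r).
Proof. by move=> h; split=> // e' i; right. Qed.

Lemma g_neg (R : realType) (L : signature R) Mcl (S : set (formula L)) (q : cond L) phi :
  (forall phi, S phi -> forall c, ~ fconst phi c) -> subformula_closed S ->
  SigmaC S (FNeg phi) -> sentence (FNeg phi) -> is_condition Mcl S q ->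
  gg Mcl S q (FNeg phi) = 1 - Hw Mcl S q phi.
Proof.
move=> hnc hsc hS hs hq.
have hS1 := SigmaC_Neg hsc hS; have hs1 : sentence phi := hs.
apply/eqP; rewrite eq_le; apply/andP; split.
- suff: Hw Mcl S q phi <= 1 - gg Mcl S q (FNeg phi) by lra.
  apply: Hw_le => // r br; have [M [C0 [a w]]] := cond_wit (below_cond br).
  apply/ler_addgt0Pr => e e0.
  have [c1 _ _] := @add_entry R L Mcl S r M C0 a phi (Defs.sval a phi + e / 2) hnc
    (below_cond br) w hS1 hs1 ltac:(lra).
  have g1 := le_trans (g_lb phi (in_below c1)) (H_le_head _ _ _).
  have [c2 _ _] := @add_entry R L Mcl S r M C0 a (FNeg phi) (1 - Defs.sval a phi + e / 2) hnc
    (below_cond br) w hS hs ltac:(rewrite svalN; lra).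
  have g2 := le_trans (g_lb (FNeg phi) (below_trans br (in_below c2)))
    (H_le_head _ _ _).
  lra.
- apply: g_ge => // r br; apply: H_ge; first by have := Hw_ge0 phi hq; lra.
  move=> s s1 hin.
  have [M [C0 [a [_ _ w3]]]] := cond_wit (below_cond br).
  have := w3 _ hin; rewrite /= svalN => hv.
  have /andP[v0 v1] := sval_range a phi.
  suff: 1 - s <= gg Mcl S r phi by have := Hw_ge phi br; lra.
  apply: g_ge (below_cond br) _ => r' br'; apply: H_ge; first lra.
  move=> t _ hin'.
  have [M' [C0' [a' [_ _ w3']]]] := cond_wit (below_cond br').
  have h1 := w3' _ hin'.
  have h2 : (FNeg phi, s).1 = FNeg phi by [].
  have := w3' _ (proj2 br' _ hin); rewrite /= svalN => h3.
  move: h1 => /= h1; lra.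
Qed.

Lemma part_neg (R : realType) (L : signature R) Mcl (S : set (formula L)) (p : cond L) phi :
  (forall phi, S phi -> forall c, ~ fconst phi c) -> subformula_closed S ->
  SigmaC S (FNeg phi) -> sentence (FNeg phi) -> is_condition Mcl S p ->
  Hw Mcl S p (FNeg phi) = 1 - inf [set Hw Mcl S q phi | q in below Mcl S p].
Proof.
move=> hnc hsc hS hs hp.
apply/eqP; rewrite eq_le; apply/andP; split.
- apply: Hw_le => // q bq; rewrite (g_neg hnc hsc hS hs (below_cond bq)).
  suff : inf [set Hw Mcl S q0 phi | q0 in below Mcl S p] <= Hw Mcl S q phi by lra.
  by apply: (inf_img_le (B := 0)) bq => r br; exact: Hw_ge0 (below_cond br).
- suff : 1 - Hw Mcl S p (FNeg phi) <= inf [set Hw Mcl S q phi | q in below Mcl S p] by lra.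
  apply: le_inf_img; first by exists p; exact: below_refl.
  move=> q bq; have := Hw_ge (FNeg phi) bq.
  rewrite (g_neg hnc hsc hS hs (below_cond bq)); lra.
Qed.

Lemma g_half (R : realType) (L : signature R) Mcl (S : set (formula L)) (q : cond L) phi :
  (forall phi, S phi -> forall c, ~ fconst phi c) -> subformula_closed S ->
  SigmaC S (FHalf phi) -> sentence (FHalf phi) -> is_condition Mcl S q ->
  gg Mcl S q (FHalf phi) = gg Mcl S q phi / 2.
Proof.
move=> hnc hsc hS hs hq.
have hS1 := SigmaC_Half hsc hS; have hs1 : sentence phi := hs.
apply/eqP; rewrite eq_le; apply/andP; split.
- suff: 2 * gg Mcl S q (FHalf phi) <= gg Mcl S q phi by lra.
  apply: g_ge => // r br; have [M [C0 [a w]]] := cond_wit (below_cond br).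
  have hv := sval_le_H phi w.
  apply/ler_addgt0Pr => e e0.
  have [c2 _ _] := @add_entry R L Mcl S r M C0 a (FHalf phi) (Defs.sval a phi / 2 + e / 2) hnc
    (below_cond br) w hS hs ltac:(rewrite svalHalf; lra).
  have g2 := le_trans (g_lb (FHalf phi) (below_trans br (in_below c2)))
    (H_le_head _ _ _).
  lra.
- apply: g_ge => // r br; apply: H_ge; first by have := g_le1 phi hq; lra.
  move=> s s1 hin.
  have [M [C0 [a w]]] := cond_wit (below_cond br).
  have := (let: And3 _ _ w3 := w in w3) _ hin; rewrite /= svalHalf => hv.
  apply/ler_addgt0Pr => e e0.
  have [c2 _ _] := @add_entry R L Mcl S r M C0 a phi (Defs.sval a phi + e) hnc
    (below_cond br) w hS1 hs1 ltac:(lra).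
  have g2 := le_trans (g_lb phi (below_trans br (in_below c2)))
    (H_le_head _ _ _).
  lra.
Qed.

Lemma part_half (R : realType) (L : signature R) Mcl (S : set (formula L)) (p : cond L) phi :
  (forall phi, S phi -> forall c, ~ fconst phi c) -> subformula_closed S ->
  SigmaC S (FHalf phi) -> sentence (FHalf phi) -> is_condition Mcl S p ->
  Hw Mcl S p (FHalf phi) = Hw Mcl S p phi / 2.
Proof.
move=> hnc hsc hS hs hp.
apply/eqP; rewrite eq_le; apply/andP; split.
- apply: Hw_le => // q bq; rewrite (g_half hnc hsc hS hs (below_cond bq)).
  by have := Hw_ge phi bq; lra.
- suff : Hw Mcl S p phi <= 2 * Hw Mcl S p (FHalf phi) by lra.
  apply: Hw_le => // q bq; have := Hw_ge (FHalf phi) bq.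
  rewrite (g_half hnc hsc hS hs (below_cond bq)); lra.
Qed.
Lemma img_eq (R : realType) (T : Type) (A : set T) (f g : T -> R) :
  (forall x, A x -> f x = g x) -> [set f x | x in A] = [set g x | x in A].
Proof.
move=> h; apply/seteqP; split=> _ [x Ax <-]; exists x => //; by rewrite h.
Qed.

Lemma min1_lt (R : realType) (x s : R) : Num.min x 1 < s -> s <= 1 -> x < s.
Proof. by rewrite gt_min => /orP[//|h1] s1; have := lt_le_trans h1 s1; rewrite ltxx. Qed.

Lemma min_le_l (R : realType) (x y : R) : Num.min x y <= x.
Proof. by rewrite ge_min lexx. Qed.

Lemma g_plus (R : realType) (L : signature R) Mcl (S : set (formula L)) (q : cond L) phi psi :
  (forall phi, S phi -> forall c, ~ fconst phi c) -> subformula_closed S ->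
  SigmaC S (FPlus phi psi) -> sentence (FPlus phi psi) -> is_condition Mcl S q ->
  gg Mcl S q (FPlus phi psi) =
    inf [set Num.min (Hw Mcl S q' phi + Hw Mcl S q' psi) 1 | q' in below Mcl S q].
Proof.
move=> hnc hsc hS hs hq.
have [hS1 hS2] := SigmaC_Plus hsc hS.
have hs1 : sentence phi := fun x h => hs x (or_introl h).
have hs2 : sentence psi := fun x h => hs x (or_intror h).
have K0 : forall q', below Mcl S q q' -> 0 <= Num.min (Hw Mcl S q' phi + Hw Mcl S q' psi) 1.
  move=> q' bq; have := Hw_ge0 phi (below_cond bq); have := Hw_ge0 psi (below_cond bq).
  by move=> h1 h2; rewrite le_min; apply/andP; split; lra.
apply/eqP; rewrite eq_le; apply/andP; split.
- apply: le_inf_img; first by exists q; exact: below_refl.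
  move=> q' bq; have cq := below_cond bq.
  apply: le_trans (g_mono _ bq) _.
  rewrite le_min; apply/andP; split; last exact: g_le1.
  suff: gg Mcl S q' (FPlus phi psi) - Hw Mcl S q' psi <= gg Mcl S q' phi.
    by have := g_le_Hw phi cq; lra.
  apply: g_ge cq _ => r1 br1.
  suff: gg Mcl S q' (FPlus phi psi) - H r1 phi <= gg Mcl S r1 psi.
    by have := Hw_ge psi br1; lra.
  apply: g_ge (below_cond br1) _ => r2 br2.
  have [M [C0 [a w]]] := cond_wit (below_cond br2).
  have hv1 := sval_le_H phi w; have hv2 := sval_le_H psi w.
  have hm := H_mono phi (proj2 br2).
  apply/ler_addgt0Pr => e e0.
  have [c3 _ _] := @add_entry R L Mcl S r2 M C0 a (FPlus phi psi)
    (Defs.sval a (FPlus phi psi) + e) hnc (below_cond br2) w hS hs ltac:(lra).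
  have g3 := le_trans (g_lb (FPlus phi psi) (below_trans br1 (below_trans br2 (in_below c3))))
    (H_le_head _ _ _).
  have := min_le_l (Defs.sval a phi + Defs.sval a psi) 1.
  rewrite svalP in g3; lra.
- apply: g_ge => // r br; apply: H_ge.
    apply: le_trans (inf_img_le (B := 0) K0 (below_refl hq)) _; by rewrite ge_min lexx orbT.
  move=> s s1 hin.
  have [M [C0 [a w]]] := cond_wit (below_cond br).
  have := (let: And3 _ _ w3 := w in w3) _ hin; rewrite /= svalP => /min1_lt /(_ s1) hv.
  apply/ler_addgt0Pr => e e0.
  have [c1 _ [C1 w1]] := @add_entry R L Mcl S r M C0 a phi (Defs.sval a phi + e / 2) hnc
    (below_cond br) w hS1 hs1 ltac:(lra).
  have [c2 _ _] := @add_entry R L Mcl S _ M C1 a psi (Defs.sval a psi + e / 2) hnc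
    c1 w1 hS2 hs2 ltac:(lra).
  have b2 := below_trans br (below_trans (in_below c1) (in_below c2)).
  apply: le_trans (inf_img_le (B := 0) K0 b2) _.
  apply: le_trans (min_le_l _ _) _.
  have h1 := Hw_entry c2 (or_intror (or_introl erefl)).
  have h2 := Hw_entry c2 (or_introl erefl).
  lra.
Qed.
Lemma g_and (R : realType) (L : signature R) Mcl (S : set (formula L)) (q : cond L) Phi :
  (forall phi, S phi -> forall c, ~ fconst phi c) -> subformula_closed S ->
  SigmaC S (FAnd Phi) -> sentence (FAnd Phi) -> is_condition Mcl S q ->
  gg Mcl S q (FAnd Phi) =
    inf [set inf (range (fun n => Hw Mcl S q' (Phi n))) | q' in below Mcl S q].
Proof.
move=> hnc hsc hS hs hq.
have hSn := SigmaC_And hsc hS.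
have hsn : forall n, sentence (Phi n) := fun n x h => hs x (ex_intro _ n h).
have Kb : forall q', is_condition Mcl S q' ->
    0 <= inf (range (fun n => Hw Mcl S q' (Phi n))) <= 1 /\
    forall n, inf (range (fun n => Hw Mcl S q' (Phi n))) <= Hw Mcl S q' (Phi n).
  move=> q' cq; apply: (@inf_range_bnd R nat _ 0%N) => n.
  by rewrite Hw_ge0 ?Hw_le1.
have K0 : forall q', below Mcl S q q' -> 0 <= inf (range (fun n => Hw Mcl S q' (Phi n))).
  by move=> q' bq; case: (Kb _ (below_cond bq)) => /andP[].
apply/eqP; rewrite eq_le; apply/andP; split.
- apply: le_inf_img; first by exists q; exact: below_refl.
  move=> q' bq; have cq := below_cond bq.
  apply: le_trans (g_mono _ bq) _.
  apply: lb_le_inf; first by exists (Hw Mcl S q' (Phi 0%N)), 0%N.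
  move=> _ [n _ <-]; apply: le_trans (g_le_Hw _ cq).
  apply: g_ge cq _ => r1 br1.
  have [M [C0 [a w]]] := cond_wit (below_cond br1).
  have hv := sval_le_H (Phi n) w.
  have hle : Defs.sval a (FAnd Phi) <= Defs.sval a (Phi n).
    by case: (@inf_range_bnd R _ (fun n => Defs.sval a (Phi n)) 0%N (fun n => sval_range a (Phi n))).
  apply/ler_addgt0Pr => e e0.
  have [c3 _ _] := @add_entry R L Mcl S r1 M C0 a (FAnd Phi)
    (Defs.sval a (FAnd Phi) + e) hnc (below_cond br1) w hS hs ltac:(lra).
  have g3 := le_trans (g_lb (FAnd Phi) (below_trans br1 (in_below c3))) (H_le_head _ _ _).
  lra.
- apply: g_ge => // r br; apply: H_ge.
    apply: le_trans (inf_img_le (B := 0) K0 (below_refl hq)) _.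
    by case: (Kb _ hq) => /andP[].
  move=> s s1 hin.
  have [M [C0 [a w]]] := cond_wit (below_cond br).
  have hv0 := (let: And3 _ _ w3 := w in w3) _ hin.
  have hv : inf (range (fun n => Defs.sval a (Phi n))) < s by exact: hv0.
  have [_ [n _ <-] hn] := inf_lt (ex_intro _ _ (ex_intro2 _ _ 0%N I erefl)) hv.
  apply/ler_addgt0Pr => e e0.
  have [c1 _ _] := @add_entry R L Mcl S r M C0 a (Phi n) (Defs.sval a (Phi n) + e) hnc
    (below_cond br) w (hSn n) (hsn n) ltac:(lra).
  have b1 := below_trans br (in_below c1).
  apply: le_trans (inf_img_le (B := 0) K0 b1) _.
  apply: le_trans ((Kb _ c1).2 n) _.
  have h1 := Hw_entry c1 (or_introl erefl).
  lra.
Qed.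

Lemma g_inf (R : realType) (L : signature R) Mcl (S : set (formula L)) (q : cond L) x phi :
  (forall phi, S phi -> forall c, ~ fconst phi c) -> subformula_closed S ->
  SigmaC S (FInf x phi) -> sentence (FInf x phi) -> is_condition Mcl S q ->
  gg Mcl S q (FInf x phi) =
    inf [set inf (range (fun c : nat => Hw Mcl S q' (fsubst x c phi))) | q' in below Mcl S q].
Proof.
move=> hnc hsc hS hs hq.
have hSn := SigmaC_Inf hsc hS.
have hsn : forall c, sentence (fsubst x c phi) := fun c => @sentence_Inf R L x phi c hs.
have Kb : forall q', is_condition Mcl S q' ->
    0 <= inf (range (fun c => Hw Mcl S q' (fsubst x c phi))) <= 1 /\
    forall c, inf (range (fun c => Hw Mcl S q' (fsubst x c phi))) <= Hw Mcl S q' (fsubst x c phi).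
  move=> q' cq; apply: (@inf_range_bnd R nat _ 0%N) => n.
  by rewrite Hw_ge0 ?Hw_le1.
have K0 : forall q', below Mcl S q q' -> 0 <= inf (range (fun c => Hw Mcl S q' (fsubst x c phi))).
  by move=> q' bq; case: (Kb _ (below_cond bq)) => /andP[].
apply/eqP; rewrite eq_le; apply/andP; split.
- apply: le_inf_img; first by exists q; exact: below_refl.
  move=> q' bq; have cq := below_cond bq.
  apply: le_trans (g_mono _ bq) _.
  apply: lb_le_inf; first by exists (Hw Mcl S q' (fsubst x 0%N phi)), 0%N.
  move=> _ [c _ <-]; apply: le_trans (g_le_Hw _ cq).
  apply: g_ge cq _ => r1 br1.
  have [M [C0 [a w]]] := cond_wit (below_cond br1).
  have hv := sval_le_H (fsubst x c phi) w.
  have hle : Defs.sval a (FInf x phi) <= Defs.sval a (fsubst x c phi).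
    rewrite /Defs.sval feval_subst /=.
    by case: (@inf_range_bnd R _ (fun m => feval a (upd (fun _ => inhab M) x m) phi) (a c)
                (fun m => feval_range a _ phi)).
  apply/ler_addgt0Pr => e e0.
  have [c3 _ _] := @add_entry R L Mcl S r1 M C0 a (FInf x phi)
    (Defs.sval a (FInf x phi) + e) hnc (below_cond br1) w hS hs ltac:(lra).
  have g3 := le_trans (g_lb (FInf x phi) (below_trans br1 (in_below c3))) (H_le_head _ _ _).
  lra.
- apply: g_ge => // r br; apply: H_ge.
    apply: le_trans (inf_img_le (B := 0) K0 (below_refl hq)) _.
    by case: (Kb _ hq) => /andP[].
  move=> s s1 hin.
  have [M [C0 [a [w1 w2 w3]]]] := cond_wit (below_cond br).
  have hv0 := w3 _ hin.
  have hv : inf (range (fun m => feval a (upd (fun _ => inhab M) x m) phi)) < s by exact: hv0.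
  have [_ [m _ <-] hm] := inf_lt (ex_intro _ _ (ex_intro2 _ _ (inhab M) I erefl)) hv.
  have [c hc] := fresh C0.
  pose a' := fun d => if d == c then m else a d.
  have eqa : forall d, d \in C0 -> a d = a' d.
    by move=> d hd; rewrite /a'; case: eqP => // ed; subst d; rewrite hd in hc.
  have w' : wit Mcl r M C0 a'.
    split=> // e he; rewrite /Defs.sval -(feval_ext (a := a)); first exact: w3.
    by move=> d hd; apply: eqa; apply: w2 he hd.
  have hv' : Defs.sval a' (fsubst x c phi) < s.
    have ac : a' c = m by rewrite /a' eqxx.
    rewrite /Defs.sval feval_subst ac -(feval_ext (a := a) (a' := a')) //.
    by move=> d hd; apply: eqa; apply: (w2 _ _ hin).
  apply/ler_addgt0Pr => e e0.
  have [c1 _ _] := @add_entry R L Mcl S r M C0 a' (fsubst x c phi)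
    (Defs.sval a' (fsubst x c phi) + e) hnc (below_cond br) w' (hSn c) (hsn c) ltac:(lra).
  have b1 := below_trans br (in_below c1).
  apply: le_trans (inf_img_le (B := 0) K0 b1) _.
  apply: le_trans ((Kb _ c1).2 c) _.
  have h1 := Hw_entry c1 (or_introl erefl).
  lra.
Qed.
Unset Implicit Arguments.

Theorem proposition3p3 (R : realType) (L : signature R)
    (Mcl : set (structure L)) (A S : set (formula L)) :
  is_fragment A -> S `<=` A ->
  (forall phi, atomicL phi -> S phi) -> subformula_closed S ->
  forall p : cond L, is_condition Mcl S p ->
  (forall phi, SigmaC S phi -> sentence phi ->
     Hw Mcl S p phi = sup [set Hw Mcl S q phi | q in below Mcl S p] /\
     Hw Mcl S p phi =
       sup [set inf [set Hw Mcl S q' phi | q' in below Mcl S q] | q in below Mcl S p]) /\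
  (forall phi, SigmaC S (FNeg phi) -> sentence (FNeg phi) ->
     Hw Mcl S p (FNeg phi) = 1 - inf [set Hw Mcl S q phi | q in below Mcl S p]) /\
  (forall phi, SigmaC S (FHalf phi) -> sentence (FHalf phi) ->
     Hw Mcl S p (FHalf phi) = Hw Mcl S p phi / 2) /\
  (forall phi psi, SigmaC S (FPlus phi psi) -> sentence (FPlus phi psi) ->
     Hw Mcl S p (FPlus phi psi) =
       sup [set inf [set Num.min (Hw Mcl S q' phi + Hw Mcl S q' psi) 1
                      | q' in below Mcl S q] | q in below Mcl S p]) /\
  (forall Phi : nat -> formula L, SigmaC S (FAnd Phi) -> sentence (FAnd Phi) ->
     Hw Mcl S p (FAnd Phi) =
       sup [set inf [set inf (range (fun n => Hw Mcl S q' (Phi n)))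
                      | q' in below Mcl S q] | q in below Mcl S p]) /\
  (forall (x : nat) (phi : formula L), SigmaC S (FInf x phi) -> sentence (FInf x phi) ->
     Hw Mcl S p (FInf x phi) =
       sup [set inf [set inf (range (fun c : nat => Hw Mcl S q' (fsubst x c phi)))
                      | q' in below Mcl S q] | q in below Mcl S p]).
Proof.
move=> [_ hlf _ _ _] hSA _ hsc p hp.
have hnc : forall phi, S phi -> forall c, ~ fconst phi c.
  by move=> phi Sphi; exact: (hlf _ (hSA _ Sphi)).1.
split; first by move=> phi _ _; exact: part1.
split; first by move=> phi hS hs; exact: part_neg.
split; first by move=> phi hS hs; exact: part_half.
split.
  move=> phi psi hS hs; rewrite HwE; congr sup; apply: img_eq => q bq.
  exact: g_plus hnc hsc hS hs (below_cond bq).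
split.
  move=> Phi hS hs; rewrite HwE; congr sup; apply: img_eq => q bq.
  exact: g_and hnc hsc hS hs (below_cond bq).
move=> x phi hS hs; rewrite HwE; congr sup; apply: img_eq => q bq.
exact: g_inf hnc hsc hS hs (below_cond bq).
Qed.
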